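(* Let $T$ be a tree that is not a path, let $\ell$ be a leaf of $T$, let $P_\ell$ be the path branch of $T$ containing $\ell$, let $v$ be the neighbor of $P_\ell$, and let $X \subseteq V(T)$ with $\ell \notin X$. Then \[ \mathcal{F}_{T,-X} = \mathcal{F}_{T,\ell,-X} + \mathcal{F}_{T - P_\ell,\, -(X\cup\{v\})}. \]
   Context: A fort of a graph $G$ is a nonempty set $F\subseteq V(G)$ such that every vertex outside $F$ is adjacent to either zero or at least two vertices of $F$; it is minimal if no proper subset is a fort. For a graph $H$ and a vertex set $A$, $\mathcal{F}_{H,-A}$ is the number of minimal forts of $H$ disjoint from $A$, and $\mathcal{F}_{H,\ell,-A}$ is the number of minimal forts of $H$ that contain $\ell$ and are disjoint from $A$. In a tree $T$, the path branch of a leaf $\ell$ is the maximal connected induced subgraph containing $\ell$ all of whose vertices have degree one or two in $T$; the neighbor of a path branch is the unique vertex not in the branch adjacent to a vertex of the branch (it exists when $T$ is not a path). *)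

(* Defs.v *)
From mathcomp Require Import all_boot.
Set Implicit Arguments. Unset Strict Implicit. Unset Printing Implicit Defensive.

(* A simple graph: vertex type V (finType), edge relation e : rel V
   (assumed symmetric and irreflexive in the theorem).  Induced subgraphs
   are given by a vertex set S : {set V}. *)

Section Graphs.
Variables (V : finType) (e : rel V).

Definition induced (S : {set V}) : rel V :=
  [rel x y | [&& x \in S, y \in S & e x y]].

Definition nbrs (S : {set V}) (x : V) : {set V} := [set y in S | e x y].

Definition deg (x : V) : nat := #|[set y | e x y]|.

Definition connected_on (S : {set V}) : bool :=
  [forall x in S, forall y in S, connect (induced S) x y].

Definition has_cycle : Prop :=
  exists s : seq V, [/\ 3 <= size s, uniq s & cycle e s].

Definition is_tree : Prop := connected_on [set: V] /\ ~ has_cycle.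

Definition is_path_graph : Prop := is_tree /\ forall x, deg x <= 2.

Definition leaf (l : V) : bool := deg l == 1.

Definition is_fort (S F : {set V}) : bool :=
  [&& F != set0, F \subset S &
      [forall u in S :\: F, #|nbrs S u :&: F| != 1]].

Definition minimal_fort (S F : {set V}) : bool :=
  is_fort S F && [forall F' : {set V}, (F' \proper F) ==> ~~ is_fort S F'].

Definition nforts (S A : {set V}) : nat :=
  #|[set F : {set V} | minimal_fort S F & [disjoint F & A]]|.

Definition nforts_with (S : {set V}) (l : V) (A : {set V}) : nat :=
  #|[set F : {set V} | [&& minimal_fort S F, l \in F & [disjoint F & A]]]|.

Definition branch_cand (l : V) : pred {set V} :=
  fun P => [&& l \in P, connected_on P &
               [forall x in P, (deg x == 1) || (deg x == 2)]].

Definition is_path_branch (l : V) (P : {set V}) : bool :=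
  maxset (branch_cand l) P.

Definition branch_neighbor (P : {set V}) (v : V) : Prop :=
  [/\ v \notin P, exists2 u, u \in P & e u v &
      forall w, w \notin P -> (exists2 u, u \in P & e u w) -> w = v].

End Graphs.

(* Main.v *)
Require Import Defs.
From mathcomp Require Import all_boot.
Set Implicit Arguments. Unset Strict Implicit. Unset Printing Implicit Defensive.

Section Aux.
Variables (V : finType) (e : rel V).
Hypothesis e_sym : symmetric e.

Lemma nbrsI (S F : {set V}) u : F \subset S ->
  nbrs e S u :&: F = nbrs e [set: V] u :&: F.
Proof.
move=> sub; apply/setP => y; rewrite /nbrs !inE.
case yF: (y \in F); rewrite ?andbF ?andbT //.
by rewrite (subsetP sub y yF).
Qed.

Lemma one_nbr (F : {set V}) z w : deg e z <= 1 -> e z w -> w \in F ->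
  #|nbrs e [set: V] z :&: F| = 1.
Proof.
move=> dz ezw wF.
have sub : [set w] \subset [set x | e z x] by apply/subsetP=> x; rewrite !inE => /eqP->.
have E : [set x | e z x] = [set w].
  by apply/eqP; rewrite eq_sym eqEcard sub cards1.
rewrite (_ : _ :&: F = [set w]) ?cards1 //.
apply/setP=> x; rewrite /nbrs !inE.
move/setP: E => /(_ x); rewrite !inE => ->.
by case: eqP => // ->.
Qed.

Lemma two_nbrs (F : {set V}) z y w : deg e z <= 2 -> e z y -> e z w ->
  y \notin F -> w \in F -> #|nbrs e [set: V] z :&: F| = 1.
Proof.
move=> dz ezy ezw yF wF.
have yw : y != w by apply: contraNneq yF => ->.
have sub : [set y; w] \subset [set x | e z x].
  by apply/subsetP=> x; rewrite !inE => /orP[]/eqP->.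
have E : [set x | e z x] = [set y; w].
  by apply/eqP; rewrite eq_sym eqEcard sub cards2 yw.
rewrite (_ : _ :&: F = [set w]) ?cards1 //.
apply/setP=> x; rewrite /nbrs !inE.
move/setP: E => /(_ x); rewrite !inE => ->.
case: (eqVneq x w) => [->|xw]; first by rewrite orbT.
by rewrite orbF; case: eqP => // ->; rewrite (negbTE yF).
Qed.

Variables (l : V) (P : {set V}).
Hypothesis Hleaf : leaf e l.
Hypothesis HP : is_path_branch e l P.

Lemma K (F : {set V}) : is_fort e [set: V] F -> l \notin F ->
  forall x, x \in P -> x \notin F /\ (forall w, e x w -> w \notin F).
Proof.
move=> HF lF.
have := maxsetp HP; rewrite /branch_cand => /and3P[lP conn degs].
move: HF; rewrite /is_fort => /and3P[_ _ /forallP fc].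
have fc' u : u \notin F -> #|nbrs e [set: V] u :&: F| != 1.
  by move=> uF; have := fc u; rewrite !inE uF /=.
have good_l : forall w, e l w -> w \notin F.
  move=> w elw; apply/negP=> wF.
  have := fc' l lF; rewrite (one_nbr (F:=F) _ elw wF) //.
  by move: Hleaf; rewrite /leaf => /eqP->.
move=> x xP.
move/forall_inP: conn => /(_ l lP) /forall_inP /(_ x xP) /connectP [p pth ->].
elim/last_ind: p pth => [|p z IH] //=.
rewrite rcons_path last_rcons => /andP[pth' edge].
have [yF yN] := IH pth'.
move: edge; rewrite /induced /= => /and3P[_ zP eyz].
have zF := yN _ eyz.
split=> // w ezw; apply/negP=> wF.
have dz : deg e z <= 2.
  by have := forall_inP degs z zP => /orP[]/eqP->.
have := fc' z zF.
by rewrite (two_nbrs dz _ ezw yF wF) // e_sym.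
Qed.

Variable (v : V).
Hypothesis Hv : branch_neighbor e P v.

Lemma Kall (F : {set V}) : is_fort e [set: V] F -> l \notin F ->
  F \subset ~: P /\ v \notin F.
Proof.
move=> HF lF; have HK := K HF lF.
case: Hv => _ [u uP euv] _; split; last by have [_ /(_ v euv)] := HK u uP.
apply/subsetP=> x xF; rewrite inE; apply/negP=> xP.
by have [/negP] := HK x xP.
Qed.

Lemma Efort (F : {set V}) : F \subset ~: P -> v \notin F ->
  is_fort e [set: V] F = is_fort e (~: P) F.
Proof.
move=> sub vF; rewrite /is_fort subsetT sub /=; congr andb.
case: Hv => _ _ H3.
apply/forall_inP/forall_inP => H u.
  rewrite !inE => /andP[uF uP]; rewrite nbrsI //; apply: H.
  by rewrite !inE uF.
rewrite !inE andbT => uF.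
case uP: (u \in P).
  rewrite (_ : _ :&: F = set0) ?cards0 //.
  apply/setP=> x; rewrite /nbrs !inE; apply/negP=> /andP[eux xF].
  have xP : x \notin P by have := subsetP sub x xF; rewrite inE.
  have xv := H3 x xP (ex_intro2 _ _ u uP eux).
  by move: vF; rewrite -xv xF.
rewrite -(nbrsI (S:=~: P)) //; apply: H; by rewrite !inE uF uP.
Qed.

Lemma minfort_equiv (F : {set V}) :
  ((l \notin F) && minimal_fort e [set: V] F) =
  (minimal_fort e (~: P) F && (v \notin F)).
Proof.
have lP : l \in P by have := maxsetp HP => /and3P[].
apply/idP/idP.
  move=> /andP[lF /andP[HF /forallP Hmin]].
  have [sub vF] := Kall HF lF.
  rewrite /minimal_fort -(Efort sub vF) HF vF andbT /=.
  apply/forallP=> F'; apply/implyP=> pF'; have := implyP (Hmin F') pF'.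
  apply: contra => HF'.
  have sF' := proper_sub pF'.
  rewrite Efort //; first exact: subset_trans sF' sub.
  by apply: contra vF; apply: (subsetP sF').
move=> /andP[/andP[HF /forallP Hmin] vF].
have sub : F \subset ~: P by move: HF => /and3P[].
have lF : l \notin F by apply/negP=> /(subsetP sub); rewrite inE lP.
rewrite lF /minimal_fort (Efort sub vF) HF /=.
apply/forallP=> F'; apply/implyP=> pF'; have := implyP (Hmin F') pF'.
apply: contra => HF'.
have sF' := proper_sub pF'.
rewrite -Efort //; first exact: subset_trans sF' sub.
by apply: contra vF; apply: (subsetP sF').
Qed.

End Aux.

Theorem mainTheorem12 (V : finType) (e : rel V)
  (e_sym : symmetric e) (e_irr : irreflexive e)
  (Htree : is_tree e) (Hnotpath : ~ is_path_graph e)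
  (l : V) (Hleaf : leaf e l)
  (P : {set V}) (HP : is_path_branch e l P)
  (v : V) (Hv : branch_neighbor e P v)
  (X : {set V}) (HX : l \notin X) :
  nforts e [set: V] X =
    nforts_with e [set: V] l X + nforts e (~: P) (X :|: [set v]).
Proof.
rewrite /nforts /nforts_with -(cardsID [set F : {set V} | l \in F]).
congr addn; apply: eq_card => F; rewrite !inE.
  by rewrite -andbA [[disjoint F & X] && _]andbC.
have dU : [disjoint F & X :|: [set v]] = [disjoint F & X] && (v \notin F).
  by rewrite -!setI_eq0 setIUr setU_eq0 [F :&: [set v]]setIC !setI_eq0 disjoints1.
by rewrite dU andbA (minfort_equiv e_sym Hleaf HP Hv) andbA andbAC.
Qed.
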